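(* Let $X$ be a real Banach space and let $(x_n,f_n)\in S_X\times S_{X^*}$, $n\in\mathbb{N}$, satisfy $f_n(x_n)=1$ for each $n$. Let $(y,g)\in S_X\times S_{X^*}$ satisfy $g(y)=1$, where $y$ is a point of Gâteaux smoothness of the norm. For each $k\in\mathbb{N}$ let $(c_n^{(k)})_n$ be a finitely supported sequence of non-negative reals with $\sum_n c_n^{(k)}=1$, such that (i) $\sum_n c_n^{(k)}x_n\to y$ weakly as $k\to\infty$, and (ii) $\sum_n c_n^{(k)}f_n(y)\to 1$ as $k\to\infty$. Then $P_k:=\sum_n c_n^{(k)} f_n\otimes x_n\to g\otimes y$ in the weak operator topology as $k\to\infty$, and there exist finitely supported non-negative sequences $(d_n^{(l)})_n$ with $\sum_n d_n^{(l)}=1$ ($l\in\mathbb{N}$) such that $S_l:=\sum_n d_n^{(l)}f_n\otimes x_n\to g\otimes y$ in the strong operator topology as $l\to\infty$. Moreover, if each $(x_n,f_n)$ is a Flinn pair, then $(y,g)$ is a Flinn pair.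
   Context: For $f\in X^*$ and $x\in X$, $f\otimes x: X\to X$ is the operator $v\mapsto f(v)x$. A pair $(x,f)\in S_X\times X^*$ is a Flinn pair if $\|I-f\otimes x\|=1$, where $I$ is the identity operator on $X$. WOT: $T_k\to T$ iff $\varphi(T_kv)\to\varphi(Tv)$ for all $v\in X,\varphi\in X^*$; SOT: $T_kv\to Tv$ in norm for all $v\in X$. *)

(* Defs.v *)
From Stdlib Require Export Reals.
Open Scope R_scope.

Record Banach := mkBanach {
  B_car :> Type;
  vzero : B_car;
  vadd : B_car -> B_car -> B_car;
  vopp : B_car -> B_car;
  vscal : R -> B_car -> B_car;
  vnorm : B_car -> R;
  vadd_assoc : forall a b c, vadd a (vadd b c) = vadd (vadd a b) c;
  vadd_comm : forall a b, vadd a b = vadd b a;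
  vadd_0 : forall a, vadd a vzero = a;
  vadd_opp : forall a, vadd a (vopp a) = vzero;
  vscal_1 : forall a, vscal 1 a = a;
  vscal_assoc : forall r s a, vscal r (vscal s a) = vscal (r * s) a;
  vscal_distr_v : forall r a b, vscal r (vadd a b) = vadd (vscal r a) (vscal r b);
  vscal_distr_r : forall r s a, vscal (r + s) a = vadd (vscal r a) (vscal s a);
  vnorm_eq0 : forall a, vnorm a = 0 -> a = vzero;
  vnorm_scal : forall r a, vnorm (vscal r a) = Rabs r * vnorm a;
  vnorm_triangle : forall a b, vnorm (vadd a b) <= vnorm a + vnorm b;
  vcomplete : forall u : nat -> B_car,
    (forall eps, eps > 0 -> exists N, forall m n, (m >= N)%nat -> (n >= N)%nat ->
       vnorm (vadd (u m) (vopp (u n))) < eps) ->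
    exists l, Un_cv (fun n => vnorm (vadd (u n) (vopp l))) 0
}.

Arguments vzero {_}. Arguments vadd {_}. Arguments vopp {_}.
Arguments vscal {_}. Arguments vnorm {_}.

Definition vsub {X : Banach} (a b : X) : X := vadd a (vopp b).

Fixpoint vsum {X : Banach} (f : nat -> X) (N : nat) : X :=
  match N with
  | O => f O
  | S n => vadd (vsum f n) (f (S n))
  end.

Definition bounded_linear {X : Banach} (f : X -> R) : Prop :=
  (forall a b, f (vadd a b) = f a + f b) /\
  (forall r a, f (vscal r a) = r * f a) /\
  (exists C, forall a, Rabs (f a) <= C * vnorm a).

Definition dual_norm_is {X : Banach} (f : X -> R) (r : R) : Prop :=
  is_lub (fun t => exists v : X, vnorm v <= 1 /\ t = Rabs (f v)) r.

Definition op_norm_is {X : Banach} (T : X -> X) (r : R) : Prop :=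
  is_lub (fun t => exists v : X, vnorm v <= 1 /\ t = vnorm (T v)) r.

(* f (x) x : v |-> f(v) x *)
Definition rank_one {X : Banach} (f : X -> R) (x : X) : X -> X :=
  fun v => vscal (f v) x.

Definition in_sphere {X : Banach} (x : X) : Prop := vnorm x = 1.
Definition in_dual_sphere {X : Banach} (f : X -> R) : Prop :=
  bounded_linear f /\ dual_norm_is f 1.

Definition flinn_pair {X : Banach} (x : X) (f : X -> R) : Prop :=
  in_sphere x /\ bounded_linear f /\
  op_norm_is (fun v => vsub v (rank_one f x v)) 1.

Definition gateaux_smooth {X : Banach} (y : X) : Prop :=
  forall h : X, exists l,
    derivable_pt_lim (fun t => vnorm (vadd y (vscal t h))) 0 l.

Definition weak_cv {X : Banach} (u : nat -> X) (y : X) : Prop :=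
  forall phi : X -> R, bounded_linear phi -> Un_cv (fun k => phi (u k)) (phi y).

Definition wot_cv {X : Banach} (T : nat -> X -> X) (S : X -> X) : Prop :=
  forall (v : X) (phi : X -> R), bounded_linear phi ->
    Un_cv (fun k => phi (T k v)) (phi (S v)).

Definition sot_cv {X : Banach} (T : nat -> X -> X) (S : X -> X) : Prop :=
  forall v : X, Un_cv (fun k => vnorm (vsub (T k v) (S v))) 0.

Definition fin_prob (c : nat -> R) (N : nat) : Prop :=
  (forall n, 0 <= c n) /\ (forall n, (n > N)%nat -> c n = 0) /\
  sum_f_R0 c N = 1.

Definition conv_op {X : Banach} (c : nat -> R) (N : nat)
  (x : nat -> X) (f : nat -> X -> R) : X -> X :=
  fun v => vsum (fun n => vscal (c n) (rank_one (f n) (x n) v)) N.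

(* Main.v *)
Require Import Defs.
From Stdlib Require Import Reals Lra Lia Classical ClassicalEpsilon FunctionalExtensionality.
Open Scope R_scope.

Arguments vadd_assoc {_}. Arguments vadd_comm {_}. Arguments vadd_0 {_}. Arguments vadd_opp {_}.
Arguments vscal_1 {_}. Arguments vscal_assoc {_}. Arguments vscal_distr_v {_}. Arguments vscal_distr_r {_}.
Arguments vnorm_eq0 {_}. Arguments vnorm_scal {_}. Arguments vnorm_triangle {_}. Arguments vcomplete {_}.

Lemma vadd_0l {X : Banach} (a : X) : vadd vzero a = a.
Proof. rewrite vadd_comm; apply vadd_0. Qed.

Lemma vadd_cancel {X : Banach} (a b c : X) : vadd a b = vadd a c -> b = c.
Proof.
  intros H. assert (H2 : vadd (vopp a) (vadd a b) = vadd (vopp a) (vadd a c)) by now rewrite H.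
  rewrite !vadd_assoc in H2. rewrite (vadd_comm (vopp a) a), vadd_opp, !vadd_0l in H2. exact H2.
Qed.

Lemma vscal_0 {X : Banach} (a : X) : vscal 0 a = vzero.
Proof.
  apply (vadd_cancel (vscal 0 a)). rewrite vadd_0, <- vscal_distr_r. f_equal; ring.
Qed.

Lemma vscal_r0 {X : Banach} (r : R) : vscal r (@vzero X) = vzero.
Proof. rewrite <- (vscal_0 vzero), vscal_assoc. f_equal; ring. Qed.

Lemma vopp_scal {X : Banach} (a : X) : vopp a = vscal (-1) a.
Proof.
  apply (vadd_cancel a). rewrite vadd_opp. rewrite <- (vscal_1 a) at 1.
  rewrite <- vscal_distr_r. replace (1 + -1) with 0 by ring. now rewrite vscal_0.
Qed.

Lemma vnorm_0 {X : Banach} : vnorm (@vzero X) = 0.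
Proof. rewrite <- (vscal_0 vzero), vnorm_scal, Rabs_R0. ring. Qed.

Lemma vnorm_opp {X : Banach} (a : X) : vnorm (vopp a) = vnorm a.
Proof. rewrite vopp_scal, vnorm_scal. replace (Rabs (-1)) with 1. ring. rewrite Rabs_left by lra. ring. Qed.

Lemma vnorm_nonneg {X : Banach} (a : X) : 0 <= vnorm a.
Proof.
  pose proof (vnorm_triangle a (vopp a)). rewrite vadd_opp, vnorm_0, vnorm_opp in H. lra.
Qed.

Lemma vscal_add_l {X : Banach} (r s : R) (a : X) : vadd (vscal r a) (vscal s a) = vscal (r+s) a.
Proof. now rewrite vscal_distr_r. Qed.

Lemma vopp_add {X : Banach} (a b : X) : vopp (vadd a b) = vadd (vopp a) (vopp b).
Proof. rewrite !vopp_scal. now rewrite vscal_distr_v. Qed.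

Lemma vopp_opp {X : Banach} (a : X) : vopp (vopp a) = a.
Proof. rewrite !vopp_scal, vscal_assoc. replace (-1 * -1) with 1 by ring. apply vscal_1. Qed.

Lemma vsub_norm_sym {X : Banach} (a b : X) : vnorm (vsub a b) = vnorm (vsub b a).
Proof.
  unfold vsub. rewrite <- vnorm_opp, vopp_add, vopp_opp, vadd_comm. reflexivity.
Qed.

Lemma vnorm_sub_tri {X : Banach} (a b c : X) :
  vnorm (vsub a c) <= vnorm (vsub a b) + vnorm (vsub b c).
Proof.
  unfold vsub. replace (vadd a (vopp c)) with (vadd (vadd a (vopp b)) (vadd b (vopp c))).
  apply vnorm_triangle.
  rewrite <- vadd_assoc, (vadd_assoc (vopp b)), (vadd_comm (vopp b) b), vadd_opp, vadd_0l. reflexivity.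
Qed.

Lemma vnorm_rev {X : Banach} (a b : X) : Rabs (vnorm a - vnorm b) <= vnorm (vsub a b).
Proof.
  assert (H1 : vnorm a <= vnorm (vsub a b) + vnorm b).
  { pose proof (vnorm_sub_tri a b vzero). unfold vsub in *. rewrite vopp_scal, vscal_r0, !vadd_0 in H. exact H. }
  assert (H2 : vnorm b <= vnorm (vsub a b) + vnorm a).
  { pose proof (vnorm_sub_tri b a vzero). rewrite (vsub_norm_sym b a) in H. unfold vsub in *. rewrite vopp_scal, vscal_r0, !vadd_0 in H.
    lra. }
  apply Rabs_le; lra.
Qed.

Lemma vsub_eq0 {X : Banach} (a : X) : vsub a a = vzero.
Proof. apply vadd_opp. Qed.

Definition linf {X : Banach} (h : X -> R) : Prop :=
  (forall a b, h (vadd a b) = h a + h b) /\ (forall r a, h (vscal r a) = r * h a).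

Lemma linf_of_bl {X : Banach} (h : X -> R) : bounded_linear h -> linf h.
Proof. intros [A [B _]]. split; assumption. Qed.

Lemma linf_zero {X : Banach} (h : X -> R) : linf h -> h vzero = 0.
Proof. intros [A B]. rewrite <- (vscal_0 vzero), B. ring. Qed.

Lemma linf_opp {X : Banach} (h : X -> R) a : linf h -> h (vopp a) = - h a.
Proof. intros [A B]. rewrite vopp_scal, B. ring. Qed.

Lemma linf_sub {X : Banach} (h : X -> R) a b : linf h -> h (vsub a b) = h a - h b.
Proof. intros L. unfold vsub. rewrite (proj1 L), linf_opp by exact L. ring. Qed.

Lemma dual_bound {X : Banach} (h : X -> R) : bounded_linear h -> dual_norm_is h 1 ->
  forall u, Rabs (h u) <= vnorm u.
Proof.
  intros Hb [Hub _] u. destruct (Req_dec (vnorm u) 0) as [E|E].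
  - apply vnorm_eq0 in E. subst. rewrite linf_zero by (apply linf_of_bl; auto). rewrite vnorm_0, Rabs_R0. lra.
  - pose proof (vnorm_nonneg u).
    set (w := vscal (/ vnorm u) u).
    assert (Hw : vnorm w = 1). { unfold w. rewrite vnorm_scal, Rabs_right. field. auto.
      apply Rle_ge, Rlt_le, Rinv_0_lt_compat; lra. }
    assert (Hw2 : Rabs (h w) <= 1). { apply Hub. exists w. split; [lra|reflexivity]. }
    unfold w in Hw2. rewrite (proj2 (linf_of_bl h Hb)) in Hw2.
    rewrite Rabs_mult, Rabs_right in Hw2 by (apply Rle_ge, Rlt_le, Rinv_0_lt_compat; lra).
    apply Rmult_le_compat_l with (r := vnorm u) in Hw2; [|lra].
    rewrite <- Rmult_assoc, Rinv_r in Hw2 by auto. lra.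
Qed.

Lemma bl_bound {X : Banach} (h : X -> R) : bounded_linear h ->
  exists C, 0 <= C /\ forall u, Rabs (h u) <= C * vnorm u.
Proof.
  intros [_ [_ [C HC]]]. exists (Rabs C). split. apply Rabs_pos.
  intros u. eapply Rle_trans. apply HC. apply Rmult_le_compat_r. apply vnorm_nonneg. apply RRle_abs.
Qed.

Lemma vadd_swap {X : Banach} (a b c d : X) : vadd (vadd a b) (vadd c d) = vadd (vadd a c) (vadd b d).
Proof.
  rewrite <- !vadd_assoc. f_equal. rewrite !vadd_assoc. f_equal. apply vadd_comm.
Qed.

Lemma vsum_ext {X : Banach} (f g : nat -> X) N : (forall n, (n <= N)%nat -> f n = g n) -> vsum f N = vsum g N.
Proof.
  induction N; intros H; simpl. apply H; lia. rewrite IHN by (intros; apply H; lia). rewrite H by lia. reflexivity.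
Qed.

Lemma vsum_add {X : Banach} (f g : nat -> X) N : vsum (fun n => vadd (f n) (g n)) N = vadd (vsum f N) (vsum g N).
Proof. induction N; simpl. reflexivity. rewrite IHN. apply vadd_swap. Qed.

Lemma vsum_scal {X : Banach} (f : nat -> X) r N : vscal r (vsum f N) = vsum (fun n => vscal r (f n)) N.
Proof. induction N; simpl. reflexivity. rewrite vscal_distr_v, IHN. reflexivity. Qed.

Lemma linf_vsum {X : Banach} (h : X -> R) (f : nat -> X) N : linf h -> h (vsum f N) = sum_f_R0 (fun n => h (f n)) N.
Proof. intros L. induction N; simpl. reflexivity. rewrite (proj1 L), IHN. reflexivity. Qed.

Lemma vsum_norm {X : Banach} (f : nat -> X) N : vnorm (vsum f N) <= sum_f_R0 (fun n => vnorm (f n)) N.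
Proof. induction N; simpl. lra. eapply Rle_trans. apply vnorm_triangle. lra. Qed.

Lemma vsum_zero {X : Banach} N : vsum (fun _ => @vzero X) N = vzero.
Proof. induction N; simpl. reflexivity. rewrite IHN. apply vadd_0. Qed.

Lemma vsum_tail {X : Banach} (f : nat -> X) N M : (forall n, (n > N)%nat -> f n = vzero) -> (N <= M)%nat ->
  vsum f M = vsum f N.
Proof.
  intros H HM. induction HM. reflexivity. simpl. rewrite IHHM, H by lia. apply vadd_0.
Qed.

Lemma sum_tail (f : nat -> R) N M : (forall n, (n > N)%nat -> f n = 0) -> (N <= M)%nat ->
  sum_f_R0 f M = sum_f_R0 f N.
Proof.
  intros H HM. induction HM. reflexivity. simpl. rewrite IHHM, H by lia. ring.
Qed.

Lemma vsum_const {X : Banach} (c : nat -> R) (v : X) N : vsum (fun n => vscal (c n) v) N = vscal (sum_f_R0 c N) v.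
Proof. induction N; simpl. reflexivity. rewrite IHN, vscal_distr_r. reflexivity. Qed.

Lemma vsum_exchange {X : Banach} (F : nat -> nat -> X) L M :
  vsum (fun n => vsum (fun k => F k n) L) M = vsum (fun k => vsum (fun n => F k n) M) L.
Proof.
  induction L; simpl. reflexivity.
  rewrite (vsum_add (fun n => vsum (fun k => F k n) L) (fun n => F (S L) n)). rewrite IHL. reflexivity.
Qed.

Lemma sum_exchange (F : nat -> nat -> R) L M :
  sum_f_R0 (fun n => sum_f_R0 (fun k => F k n) L) M = sum_f_R0 (fun k => sum_f_R0 (fun n => F k n) M) L.
Proof.
  induction L; simpl. reflexivity.
  rewrite (plus_sum (fun n => sum_f_R0 (fun k => F k n) L) (fun n => F (S L) n)). rewrite IHL. reflexivity.
Qed.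

Lemma sum_scal_l (f : nat -> R) r N : r * sum_f_R0 f N = sum_f_R0 (fun n => r * f n) N.
Proof. rewrite scal_sum. apply sum_eq. intros; ring. Qed.

Lemma sum_nonneg (f : nat -> R) N : (forall n, (n <= N)%nat -> 0 <= f n) -> 0 <= sum_f_R0 f N.
Proof. intros H. induction N; simpl. apply H; lia. pose proof (H (S N) (le_n _)). pose proof (IHN (fun n h => H n (le_S _ _ h))). lra. Qed.


Lemma smul {X : Banach} (y v : X) : gateaux_smooth y -> vnorm y = 1 ->
  forall eps, eps > 0 -> exists del, del > 0 /\ exists l, forall h : X -> R, linf h ->
    (forall u, h u <= vnorm u) -> h y > 1 - del -> Rabs (h v - l) < eps.
Proof.
  intros Hs Hy eps Heps. destruct (Hs v) as [l Hl].
  destruct (Hl (eps/2) ltac:(lra)) as [[dl Hdl] Hd]. simpl in Hd.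
  set (t := dl/2).
  assert (Ht : 0 < t) by (unfold t; lra).
  assert (F0 : vnorm (vadd y (vscal 0 v)) = 1) by (rewrite vscal_0, vadd_0; auto).
  pose proof (Hd t ltac:(lra) ltac:(rewrite Rabs_right; unfold t; lra)) as D1.
  pose proof (Hd (-t) ltac:(lra) ltac:(rewrite Rabs_left; unfold t; lra)) as D2.
  rewrite Rplus_0_l, F0 in D1, D2.
  set (A := vnorm (vadd y (vscal t v))) in *.
  set (B := vnorm (vadd y (vscal (-t) v))) in *.
  assert (EA : (A - 1) / t < l + eps/2) by (apply Rabs_def2 in D1; lra).
  assert (EB : (B - 1) / (-t) > l - eps/2) by (apply Rabs_def2 in D2; lra).
  assert (EA' : A - 1 < t * (l + eps/2)).
  { replace (A - 1) with (t * ((A-1)/t)) by (field; lra). apply Rmult_lt_compat_l; lra. }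
  assert (EB' : B - 1 < t * (- l + eps/2)).
  { replace (B - 1) with ((-t) * ((B-1)/(-t))) by (field; lra).
    replace (t * (-l + eps/2)) with ((-t) * (l - eps/2)) by ring.
    apply Rmult_lt_gt_compat_neg_l; lra. }
  exists (t * (eps/2)). split. nra. exists l.
  intros h Lh Hh Hhy.
  pose proof (Hh (vadd y (vscal t v))) as H1. pose proof (Hh (vadd y (vscal (-t) v))) as H2.
  fold A in H1. fold B in H2. rewrite (proj1 Lh), (proj2 Lh) in H1, H2.
  assert (t * h v < t * (l + eps)) by lra.
  assert (t * (- h v) < t * (- l + eps)) by lra.
  apply Rmult_lt_reg_l in H; auto. apply Rmult_lt_reg_l in H0; auto.
  apply Rabs_def1; lra.
Qed.

Lemma smul2 {X : Banach} (y v : X) (g : X -> R) : gateaux_smooth y -> vnorm y = 1 ->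
  linf g -> (forall u, g u <= vnorm u) -> g y = 1 ->
  forall eps, eps > 0 -> exists del, del > 0 /\ forall h : X -> R, linf h ->
    (forall u, h u <= vnorm u) -> h y > 1 - del -> Rabs (h v - g v) < eps.
Proof.
  intros Hs Hy Lg Hg Hgy eps Heps.
  destruct (smul y v Hs Hy (eps/2) ltac:(lra)) as [del [Hdel [l Hl]]].
  exists del. split; auto. intros h Lh Hh Hhy.
  pose proof (Hl h Lh Hh Hhy). pose proof (Hl g Lg Hg ltac:(lra)).
  replace (h v - g v) with ((h v - l) - (g v - l)) by ring.
  eapply Rle_lt_trans. apply Rabs_triang. rewrite Rabs_Ropp. lra.
Qed.

Lemma key_bound {X : Banach} (y v : X) (g : X -> R) (f : nat -> X -> R) : gateaux_smooth y -> vnorm y = 1 ->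
  linf g -> (forall u, Rabs (g u) <= vnorm u) -> g y = 1 ->
  (forall n, linf (f n)) -> (forall n u, Rabs (f n u) <= vnorm u) ->
  forall eps, eps > 0 -> exists K, 0 <= K /\ forall n, Rabs (f n v - g v) <= eps + K * (1 - f n y).
Proof.
  intros Hs Hy Lg Hg Hgy Lf Hf eps Heps.
  assert (Hg' : forall u, g u <= vnorm u) by (intros u; pose proof (Hg u); pose proof (RRle_abs (g u)); lra).
  assert (Hf' : forall n u, f n u <= vnorm u) by (intros n u; pose proof (Hf n u); pose proof (RRle_abs (f n u)); lra).
  destruct (smul2 y v g Hs Hy Lg Hg' Hgy eps Heps) as [del [Hdel Hd]].
  exists (2 * vnorm v / del). split. pose proof (vnorm_nonneg v). apply Rmult_le_pos; [lra|]. left; apply Rinv_0_lt_compat; lra.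
  intros n. pose proof (Hf' n y) as Fy. rewrite Hy in Fy.
  destruct (Rlt_dec (1 - del) (f n y)) as [Hl|Hl].
  - pose proof (Hd (f n) (Lf n) (Hf' n) Hl).
    assert (0 <= 2 * vnorm v / del * (1 - f n y)).
    { apply Rmult_le_pos; [|lra]. pose proof (vnorm_nonneg v). apply Rmult_le_pos; [lra|]. left; apply Rinv_0_lt_compat; lra. }
    lra.
  - assert (Rabs (f n v - g v) <= 2 * vnorm v).
    { eapply Rle_trans. apply Rabs_triang. rewrite Rabs_Ropp. pose proof (Hf n v); pose proof (Hg v). lra. }
    assert (2 * vnorm v <= 2 * vnorm v / del * (1 - f n y)).
    { replace (2 * vnorm v / del * (1 - f n y)) with (2 * vnorm v * ((1 - f n y) / del)) by (field; lra).
      pose proof (vnorm_nonneg v).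
      rewrite <- (Rmult_1_r (2 * vnorm v)) at 1. apply Rmult_le_compat_l. lra.
      apply (Rmult_le_reg_r del); [lra|]. unfold Rdiv. rewrite Rmult_assoc, Rinv_l by lra. lra. }
    lra.
Qed.

Lemma sum_minus (a b : nat -> R) N : sum_f_R0 a N - sum_f_R0 b N = sum_f_R0 (fun n => a n - b n) N.
Proof. induction N; simpl; lra. Qed.

Lemma conv_eval {X : Banach} c N (x : nat -> X) f v :
  conv_op c N x f v = vsum (fun n => vscal (c n * f n v) (x n)) N.
Proof. unfold conv_op, rank_one. apply vsum_ext. intros. apply vscal_assoc. Qed.

Lemma conv_err {X : Banach} (y v : X) (g : X -> R) (f : nat -> X -> R) eps K d M :
  (forall n, Rabs (f n v - g v) <= eps + K * (1 - f n y)) -> fin_prob d M ->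
  sum_f_R0 (fun n => d n * Rabs (f n v - g v)) M <= eps + K * (1 - sum_f_R0 (fun n => d n * f n y) M).
Proof.
  intros H [D0 [D1 D2]].
  eapply Rle_trans. apply sum_Rle with (Bn := fun n => d n * eps + K * (d n - d n * f n y)).
  { intros n _. replace (d n * eps + K * (d n - d n * f n y)) with (d n * (eps + K * (1 - f n y))) by ring.
    apply Rmult_le_compat_l; auto. }
  rewrite plus_sum, <- scal_sum, D2, <- sum_scal_l, <- sum_minus, D2. lra.
Qed.

Lemma wot_part {X : Banach} (x : nat -> X) (f : nat -> X -> R)
  (y : X) (g : X -> R) (c : nat -> nat -> R) (N : nat -> nat)
  (hx : forall n, in_sphere (x n))
  (hy : in_sphere y) (Lg : linf g) (Hg : forall u, Rabs (g u) <= vnorm u) (hgy : g y = 1)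
  (Lf : forall n, linf (f n)) (Hf : forall n u, Rabs (f n u) <= vnorm u)
  (hsmooth : gateaux_smooth y)
  (hc : forall k, fin_prob (c k) (N k))
  (hi : weak_cv (fun k => vsum (fun n => vscal (c k n) (x n)) (N k)) y)
  (hii : Un_cv (fun k => sum_f_R0 (fun n => c k n * f n y) (N k)) 1) :
  wot_cv (fun k => conv_op (c k) (N k) x f) (rank_one g y).
Proof.
  intros v phi Hphi. pose proof (linf_of_bl phi Hphi) as Lp.
  destruct (bl_bound phi Hphi) as [C0 [HC0 HC]].
  set (C := C0 + 1). set (G := Rabs (g v) + 1).
  assert (HG : 0 < G) by (unfold G; pose proof (Rabs_pos (g v)); lra).
  intros eps Heps.
  destruct (key_bound y v g f hsmooth hy Lg Hg hgy Lf Hf (eps / (3 * C)) ltac:(unfold C; apply Rdiv_lt_0_compat; lra))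
    as [K [HK HKb]].
  destruct (hi phi Hphi (eps / (3 * G)) ltac:(apply Rdiv_lt_0_compat; lra)) as [N1 HN1].
  destruct (hii (eps / (3 * C * (K+1))) ltac:(apply Rdiv_lt_0_compat; unfold C; nra)) as [N2 HN2].
  exists (max N1 N2). intros k Hk. unfold R_dist.
  specialize (HN1 k ltac:(lia)). specialize (HN2 k ltac:(lia)). unfold R_dist in HN1, HN2.
  rewrite linf_vsum in HN1 by exact Lp.
  unfold rank_one. rewrite conv_eval, linf_vsum by exact Lp. rewrite (proj2 Lp).
  set (S1 := sum_f_R0 (fun n => phi (vscal (c k n * f n v) (x n))) (N k)) in *.
  set (S2 := sum_f_R0 (fun n => phi (vscal (c k n) (x n))) (N k)) in *.
  set (S3 := sum_f_R0 (fun n => c k n * f n y) (N k)) in *.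
  assert (E : S1 - g v * S2 = sum_f_R0 (fun n => c k n * (f n v - g v) * phi (x n)) (N k)).
  { unfold S1, S2. rewrite sum_scal_l, sum_minus. apply sum_eq. intros i _. rewrite !(proj2 Lp). ring. }
  assert (B : Rabs (S1 - g v * S2) <= C * (eps / (3 * C) + K * (1 - S3))).
  { rewrite E. eapply Rle_trans. apply sum_f_R0_triangle.
    eapply Rle_trans. apply sum_Rle with (Bn := fun n => C * (c k n * Rabs (f n v - g v))).
    { intros n _. rewrite !Rabs_mult. destruct (hc k) as [D0 _]. rewrite (Rabs_right (c k n)) by (apply Rle_ge; auto).
      pose proof (HC (x n)). rewrite (hx n) in H. pose proof (Rabs_pos (f n v - g v)).
      assert (Rabs (phi (x n)) <= C) by (unfold C; lra). pose proof (D0 n). 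
      rewrite (Rmult_comm C). apply Rmult_le_compat_l. apply Rmult_le_pos; auto. auto. }
    rewrite <- sum_scal_l. apply Rmult_le_compat_l. unfold C; lra.
    apply conv_err; auto. }
  assert (B2 : Rabs (g v * (S2 - phi y)) < eps / 3).
  { rewrite Rabs_mult. apply Rle_lt_trans with (G * Rabs (S2 - phi y)).
    apply Rmult_le_compat_r. apply Rabs_pos. unfold G; lra.
    replace (eps/3) with (G * (eps / (3 * G))) by (field; lra). apply Rmult_lt_compat_l; auto. }
  assert (B3 : C * (eps / (3 * C) + K * (1 - S3)) <= 2 * eps / 3).
  { assert (K * (1 - S3) <= eps / (3 * C)).
    { apply Rabs_def2 in HN2. destruct HN2.
      apply Rle_trans with ((K+1) * (eps / (3 * C * (K+1)))).
      apply Rle_trans with (K * (eps / (3 * C * (K+1)))). apply Rmult_le_compat_l; lra.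
      assert (0 < eps / (3 * C * (K + 1))) by (apply Rdiv_lt_0_compat; unfold C; nra). nra.
      right. field. unfold C; lra. }
    assert (0 < C) by (unfold C; lra).
    apply Rle_trans with (C * (eps / (3 * C) + eps / (3 * C))). apply Rmult_le_compat_l; lra.
    right. field. lra. }
  replace (S1 - g v * phi y) with ((S1 - g v * S2) + g v * (S2 - phi y)) by ring.
  eapply Rle_lt_trans. apply Rabs_triang. lra.
Qed.

Definition is_chain {T : Type} (le : T -> T -> Prop) (C : T -> Prop) :=
  forall a b, C a -> C b -> le a b \/ le b a.

Lemma bw {T : Type} (le : T -> T -> Prop) (ok : T -> Prop) (x0 : T) (g : T -> T) (sup : (T -> Prop) -> T) :
  (forall a, le a a) -> (forall a b c, le a b -> le b c -> le a c) -> (forall a b, le a b -> le b a -> a = b) ->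
  ok x0 -> (forall a, ok a -> ok (g a)) -> (forall a, ok a -> le a (g a)) ->
  (forall C, is_chain le C -> (forall a, C a -> ok a) ->
     ok (sup C) /\ le x0 (sup C) /\ (forall a, C a -> le a (sup C)) /\
     (forall u, le x0 u -> (forall a, C a -> le a u) -> le (sup C) u)) ->
  exists s, ok s /\ g s = s.
Proof.
  intros Hr Ht Has Hok0 Hokg Hinf Hsup.
  set (adm := fun A : T -> Prop => A x0 /\ (forall a, A a -> A (g a)) /\
          (forall C, is_chain le C -> (forall a, C a -> A a) -> A (sup C))).
  set (M := fun a => forall A, adm A -> A a).
  assert (MokA : adm ok).
  { split; [auto|split; [auto|]]. intros C Hc HC. apply (Hsup C Hc HC). }
  assert (Mok : forall a, M a -> ok a) by (intros a Ha; apply Ha, MokA).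
  assert (Madm : adm M).
  { split; [|split].
    - intros A HA. apply HA.
    - intros a Ha A HA. apply HA. apply Ha, HA.
    - intros C Hc HC A HA. apply HA. auto. intros a Ca. apply HC; auto. }
  assert (Mind : forall A, adm A -> forall a, M a -> A a) by (intros A HA a Ha; apply Ha, HA).
  destruct Madm as [M0 [Mg Msup]].
  assert (Mx0 : forall a, M a -> le x0 a).
  { intros a Ha. apply (Mind (fun a => ok a /\ le x0 a)); auto.
    split; [split; auto|split].
    - intros b [Hb1 Hb2]. split; auto. eapply Ht; eauto.
    - intros C Hc HC. assert (HC' : forall a, C a -> ok a) by (intros; apply HC; auto).
      destruct (Hsup C Hc HC') as [A1 [A2 _]]. auto. }
  set (extreme := fun c => forall a, M a -> le a c -> a <> c -> le (g a) c).
  assert (Step3 : forall c, M c -> extreme c -> forall a, M a -> le a c \/ le (g c) a).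
  { intros c Mc Ec a Ma.
    assert (HA : forall a, M a -> M a /\ (le a c \/ le (g c) a)).
    { apply (Mind (fun a => M a /\ (le a c \/ le (g c) a))). split; [|split].
      - split; auto.
      - intros b [Mb [Hb|Hb]]; split; auto.
        + destruct (classic (b = c)) as [E|E].
          * subst. right. apply Hr.
          * left. apply Ec; auto.
        + right. eapply Ht; eauto.
      - intros C Hc HC. split. apply Msup; auto. intros; apply HC; auto.
        assert (HC' : forall a, C a -> ok a) by (intros; apply Mok, HC; auto).
        destruct (Hsup C Hc HC') as [_ [_ [S3 S4]]].
        destruct (classic (exists a, C a /\ le (g c) a)) as [[b [Cb Hb]]|NE].
        + right. eapply Ht; eauto.
        + left. apply S4. apply Mx0; auto. intros b Cb. destruct (HC b Cb) as [_ [H|H]]; auto.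
          exfalso; apply NE; eauto. }
    apply HA; auto. }
  assert (Allext : forall c, M c -> extreme c).
  { cut (adm (fun c => M c /\ extreme c)). { intros HA c Mc. apply (Mind _ HA c Mc). } split; [|split].
    - split; auto. intros a Ma H1 H2. exfalso. apply H2. apply Has; auto.
    - intros c' [Mc' Ec']. split; auto. intros a Ma H1 H2.
      destruct (Step3 c' Mc' Ec' a Ma) as [H|H].
      + destruct (classic (a = c')) as [E|E].
        * subst. apply Hr.
        * eapply Ht. apply Ec'; auto. apply Hinf. apply Mok; auto.
      + exfalso. apply H2. apply Has; auto.
    - intros C Hc HC. assert (Ms : M (sup C)) by (apply Msup; auto; intros; apply HC; auto).
      split; auto.
      assert (HC' : forall a, C a -> ok a) by (intros; apply Mok, HC; auto).
      destruct (Hsup C Hc HC') as [_ [_ [S3 S4]]].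
      intros a Ma H1 H2.
      destruct (classic (exists c, C c /\ ~ le (g c) a)) as [[c [Cc Hc1]]|NE].
      + destruct (HC c Cc) as [Mc Ec].
        destruct (Step3 c Mc Ec a Ma) as [H|H]; [|contradiction].
        destruct (classic (a = c)) as [E|E].
        * subst a. destruct (Step3 c Mc Ec (sup C) Ms) as [H3|H3]; auto.
          exfalso. apply H2. apply Has; auto.
        * eapply Ht. apply Ec; auto. apply S3; auto.
      + exfalso. apply H2. apply Has; auto. apply S4. apply Mx0; auto.
        intros b Cb. destruct (classic (le (g b) a)) as [H|H]. 2: exfalso; apply NE; eauto.
        eapply Ht; [|exact H]. apply Hinf. apply HC'; auto. }
  assert (Mch : is_chain le M).
  { intros a b Ma Mb. destruct (Step3 b Mb (Allext b Mb) a Ma) as [H|H]; auto.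
    right. eapply Ht; [|exact H]. apply Hinf; auto. }
  assert (Mss : M (sup M)) by (apply Msup; auto).
  destruct (Hsup M Mch Mok) as [_ [_ [S3 _]]].
  exists (sup M). split. apply Mok; auto. apply Has. apply S3. apply Mg; auto. apply Hinf; auto.
Qed.

Definition rglb (E : R -> Prop) : R :=
  - (epsilon (inhabits 0) (fun m => is_lub (fun r => E (-r)) m)).

Lemma glb_spec (E : R -> Prop) : (exists r, E r) -> (exists m, forall r, E r -> m <= r) ->
  (forall r, E r -> rglb E <= r) /\ (forall m, (forall r, E r -> m <= r) -> m <= rglb E).
Proof.
  intros [r0 Hr0] [m0 Hm0].
  assert (H : exists m, is_lub (fun r => E (-r)) m).
  { destruct (completeness (fun r => E (-r))) as [m Hm].
    - exists (- m0). intros r Hr. specialize (Hm0 _ Hr). lra.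
    - exists (- r0). rewrite Ropp_involutive. auto.
    - eauto. }
  pose proof (epsilon_spec (inhabits 0) _ H) as [H1 H2].
  unfold rglb. set (e := epsilon _ _) in *. split.
  - intros r Er. assert (- r <= e). { apply H1. rewrite Ropp_involutive. auto. } lra.
  - intros m Hm. assert (e <= - m). { apply H2. intros r Er. specialize (Hm _ Er). lra. } lra.
Qed.

Lemma glb_le (E : R -> Prop) r : E r -> (exists m, forall r, E r -> m <= r) -> rglb E <= r.
Proof. intros Er Hb. apply (glb_spec E); eauto. Qed.

Lemma glb_ge (E : R -> Prop) m : (exists r, E r) -> (forall r, E r -> m <= r) -> m <= rglb E.
Proof. intros Hne Hm. apply (glb_spec E); eauto. Qed.

Definition sublin {X : Banach} (q : X -> R) : Prop :=
  (forall a b, q (vadd a b) <= q a + q b) /\ (forall t a, 0 <= t -> q (vscal t a) = t * q a).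

Lemma sublin_0 {X : Banach} (q : X -> R) : sublin q -> q vzero = 0.
Proof. intros [_ H]. rewrite <- (vscal_0 vzero), H by lra. ring. Qed.

Lemma sublin_low {X : Banach} (q : X -> R) v : sublin q -> - q (vopp v) <= q v.
Proof.
  intros Hq. pose proof (proj1 Hq v (vopp v)). rewrite vadd_opp, sublin_0 in H by auto. lra.
Qed.

Lemma vec_id1 {X : Banach} (v w : X) : vadd (vadd v w) (vopp v) = w.
Proof. rewrite vadd_comm, vadd_assoc, (vadd_comm (vopp v) v), vadd_opp. apply vadd_0l. Qed.

Definition shiftf {X : Banach} (q : X -> R) (a0 : X) : X -> R :=
  fun v => rglb (fun r => exists t, 0 <= t /\ r = q (vadd v (vscal t a0)) - t * q a0).

Lemma shift_bnd {X : Banach} (q : X -> R) a0 v : sublin q ->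
  exists m, forall r, (exists t, 0 <= t /\ r = q (vadd v (vscal t a0)) - t * q a0) -> m <= r.
Proof.
  intros Hq. exists (- q (vopp v)). intros r [t [Ht ->]].
  pose proof (proj1 Hq (vadd v (vscal t a0)) (vopp v)). rewrite vec_id1, (proj2 Hq) in H by auto. lra.
Qed.

Lemma shift_ne {X : Banach} (q : X -> R) a0 v : sublin q ->
  exists r, (exists t, 0 <= t /\ r = q (vadd v (vscal t a0)) - t * q a0).
Proof. intros. exists (q v). exists 0. split. lra. rewrite vscal_0, vadd_0. ring. Qed.

Lemma shift_le {X : Banach} (q : X -> R) a0 v : sublin q -> shiftf q a0 v <= q v.
Proof.
  intros Hq. apply glb_le. exists 0. split. lra. rewrite vscal_0, vadd_0. ring. apply shift_bnd; auto.
Qed.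

Lemma shift_neg {X : Banach} (q : X -> R) a0 : sublin q -> shiftf q a0 (vopp a0) <= - q a0.
Proof.
  intros Hq. eapply Rle_trans. apply glb_le. exists 1. split. lra. reflexivity. apply shift_bnd; auto.
  rewrite vscal_1, (vadd_comm (vopp a0)), vadd_opp, sublin_0 by auto. lra.
Qed.

Lemma vec_id2 {X : Banach} (a b c d : X) : vadd (vadd a b) (vadd c d) = vadd (vadd a c) (vadd b d).
Proof. apply vadd_swap. Qed.

Lemma shift_sublin {X : Banach} (q : X -> R) a0 : sublin q -> sublin (shiftf q a0).
Proof.
  intros Hq. split.
  - intros a b.
    assert (H : forall r1 r2, (exists t, 0 <= t /\ r1 = q (vadd a (vscal t a0)) - t * q a0) ->
                 (exists t, 0 <= t /\ r2 = q (vadd b (vscal t a0)) - t * q a0) ->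
                 shiftf q a0 (vadd a b) <= r1 + r2).
    { intros r1 r2 [t [Ht ->]] [s [Hs ->]]. eapply Rle_trans. apply glb_le.
      exists (t + s). split. lra. reflexivity. apply shift_bnd; auto.
      rewrite <- vscal_add_l, vec_id2. pose proof (proj1 Hq (vadd a (vscal t a0)) (vadd b (vscal s a0))). lra. }
    assert (H2 : forall r2, (exists t, 0 <= t /\ r2 = q (vadd b (vscal t a0)) - t * q a0) ->
               shiftf q a0 (vadd a b) - r2 <= shiftf q a0 a).
    { intros r2 Hr2. apply glb_ge. apply shift_ne; auto. intros r1 Hr1. specialize (H r1 r2 Hr1 Hr2). lra. }
    assert (shiftf q a0 (vadd a b) - shiftf q a0 a <= shiftf q a0 b).
    { apply glb_ge. apply shift_ne; auto. intros r2 Hr2. specialize (H2 r2 Hr2). lra. }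
    lra.
  - intros t a Ht. destruct (Req_dec t 0) as [E|E].
    + subst. rewrite Rmult_0_l. unfold shiftf.
      assert (HE : forall r, (exists s, 0 <= s /\ r = q (vadd (vscal 0 a) (vscal s a0)) - s * q a0) -> r = 0).
      { intros r [s [Hs ->]]. rewrite vscal_0, vadd_0l, (proj2 Hq) by auto. ring. }
      apply Rle_antisym.
      * apply glb_le. exists 0. split. lra. rewrite !vscal_0, vadd_0, sublin_0 by auto. ring.
        exists 0. intros r Hr. rewrite (HE r Hr). lra.
      * apply glb_ge. apply shift_ne; auto. intros r Hr. rewrite (HE r Hr). lra.
    + assert (Htp : 0 < t) by lra. apply Rle_antisym.
      * assert (forall r, (exists s, 0 <= s /\ r = q (vadd a (vscal s a0)) - s * q a0) -> shiftf q a0 (vscal t a) / t <= r).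
        { intros r [s [Hs ->]]. apply (Rmult_le_reg_l t); auto. replace (t * (shiftf q a0 (vscal t a) / t)) with (shiftf q a0 (vscal t a)) by (field; lra).
          apply glb_le. exists (t * s). split. nra.
          assert (E3 : vadd (vscal t a) (vscal (t * s) a0) = vscal t (vadd a (vscal s a0))) by (rewrite vscal_distr_v, vscal_assoc; reflexivity).
          rewrite E3, (proj2 Hq) by lra. ring. apply shift_bnd; auto. }
        assert (shiftf q a0 (vscal t a) / t <= shiftf q a0 a). { apply glb_ge. apply shift_ne; auto. auto. }
        apply (Rmult_le_compat_l t) in H0; [|lra]. replace (t * (shiftf q a0 (vscal t a) / t)) with (shiftf q a0 (vscal t a)) in H0 by (field; lra). lra.
      * apply glb_ge. apply shift_ne; auto. intros r [s [Hs ->]].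
        assert (E2 : vadd (vscal t a) (vscal s a0) = vscal t (vadd a (vscal (s / t) a0))).
        { rewrite vscal_distr_v, vscal_assoc. f_equal. f_equal. field. lra. }
        rewrite E2, (proj2 Hq) by lra.
        replace (t * q (vadd a (vscal (s / t) a0)) - s * q a0) with (t * (q (vadd a (vscal (s / t) a0)) - (s/t) * q a0)) by (field; lra).
        apply Rmult_le_compat_l. lra. apply glb_le. exists (s / t). split. unfold Rdiv; apply Rmult_le_pos; [lra|left; apply Rinv_0_lt_compat; lra]. reflexivity. apply shift_bnd; auto.
Qed.

Lemma minimal_linear {X : Banach} (p q : X -> R) : sublin q -> (forall v, q v <= p v) ->
  (forall q', sublin q' -> (forall v, q' v <= p v) -> (forall v, q' v <= q v) -> forall v, q v <= q' v) ->
  linf q.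
Proof.
  intros Hq Hqp Hmin.
  assert (Hneg : forall a, q (vopp a) = - q a).
  { intros a. apply Rle_antisym.
    - eapply Rle_trans. apply (Hmin (shiftf q a)). apply shift_sublin; auto.
      intros v; eapply Rle_trans; [apply shift_le; auto|auto]. intros v; apply shift_le; auto.
      apply shift_neg; auto.
    - pose proof (sublin_low q (vopp a) Hq). rewrite vopp_opp in H. lra. }
  split.
  - intros a b. apply Rle_antisym. apply Hq.
    pose proof (proj1 Hq (vopp a) (vopp b)). rewrite <- vopp_add, !Hneg in H. lra.
  - intros r a. destruct (Rle_dec 0 r). apply Hq; auto.
    replace (vscal r a) with (vscal (-r) (vopp a)). rewrite (proj2 Hq), Hneg by lra. ring.
    rewrite vopp_scal, vscal_assoc. f_equal. ring.
Qed.

Definition chain_inf {X : Banach} (p : X -> R) (C : (X -> R) -> Prop) : X -> R :=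
  fun v => rglb (fun r : R => exists q : X -> R, (q = p \/ C q) /\ r = q v).

Definition fle {X : Banach} (q1 q2 : X -> R) : Prop := forall v, q2 v <= q1 v.

Lemma hb {X : Banach} (p : X -> R) : sublin p -> exists phi, linf phi /\ forall v, phi v <= p v.
Proof.
  intros Hp.
  set (ok := fun q : X -> R => sublin q /\ forall v, q v <= p v).
  set (minimal := fun q : X -> R => forall q', ok q' -> (forall v, q' v <= q v) -> forall v, q v <= q' v).
  set (P := fun q q' : X -> R => ok q' /\ (forall v, q' v <= q v) /\ ((exists v, q' v < q v) \/ minimal q)).
  set (gg := fun q => epsilon (inhabits p) (P q)).
  assert (Hgg : forall q, ok q -> P q (gg q)).
  { intros q Hq. apply epsilon_spec. destruct (classic (minimal q)) as [Hm|Hm].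
    - exists q. split; auto. split. intros; lra. auto.
    - unfold minimal in Hm. apply not_all_ex_not in Hm as [q' Hm].
      apply imply_to_and in Hm as [Hq' Hm]. apply imply_to_and in Hm as [Hle Hm].
      apply not_all_ex_not in Hm as [v Hv]. exists q'. split; auto. split; auto. left. exists v. lra. }
  assert (Hbnd : forall C v, (forall q, C q -> ok q) -> exists m, forall r, (exists q, (q = p \/ C q) /\ r = q v) -> m <= r).
  { intros C v HC. exists (- p (vopp v)). intros r [q [[->|Cq] ->]].
    apply sublin_low; auto. destruct (HC q Cq) as [Hq1 Hq2]. pose proof (sublin_low q v Hq1). pose proof (Hq2 (vopp v)). lra. }
  assert (Hne : forall C v, exists r, (exists q, (q = p \/ C q) /\ r = q v)).
  { intros C v. exists (p v). exists p. auto. }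
  destruct (bw fle ok p gg (chain_inf p)) as [s [Hs Hgs]].
  - intros a v; lra.
  - intros a b c H1 H2 v. specialize (H1 v). specialize (H2 v). lra.
  - intros a b H1 H2. apply functional_extensionality. intros v. specialize (H1 v); specialize (H2 v); lra.
  - split; auto. intros; lra.
  - intros a Ha. apply Hgg; auto.
  - intros a Ha v. apply (Hgg a Ha).
  - intros C Hc HC.
    assert (Hch : forall q1 q2, (q1 = p \/ C q1) -> (q2 = p \/ C q2) -> fle q1 q2 \/ fle q2 q1).
    { intros q1 q2 [->|C1] [->|C2].
      - left; intros v; lra.
      - left; intros v; apply (HC q2 C2).
      - right; intros v; apply (HC q1 C1).
      - apply Hc; auto. }
    assert (Hlow : forall v q, (q = p \/ C q) -> chain_inf p C v <= q v).
    { intros v q Hq. apply glb_le. eauto. apply Hbnd; auto. }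
    assert (Hsl : sublin (chain_inf p C)).
    { split.
      - intros a b.
        assert (H : forall r1 r2, (exists q, (q = p \/ C q) /\ r1 = q a) -> (exists q, (q = p \/ C q) /\ r2 = q b) ->
                  chain_inf p C (vadd a b) <= r1 + r2).
        { intros r1 r2 [q1 [Hq1 ->]] [q2 [Hq2 ->]].
          assert (S1 : sublin q1) by (destruct Hq1 as [->|Cq]; [auto|apply HC; auto]).
          assert (S2 : sublin q2) by (destruct Hq2 as [->|Cq]; [auto|apply HC; auto]).
          destruct (Hch q1 q2 Hq1 Hq2) as [H|H].
          - eapply Rle_trans. apply (Hlow _ q2 Hq2). pose proof (proj1 S2 a b). specialize (H a). lra.
          - eapply Rle_trans. apply (Hlow _ q1 Hq1). pose proof (proj1 S1 a b). specialize (H b). lra. }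
        assert (H2 : forall r2, (exists q, (q = p \/ C q) /\ r2 = q b) -> chain_inf p C (vadd a b) - r2 <= chain_inf p C a).
        { intros r2 Hr2. apply glb_ge. apply Hne. intros r1 Hr1. specialize (H r1 r2 Hr1 Hr2). lra. }
        assert (chain_inf p C (vadd a b) - chain_inf p C a <= chain_inf p C b).
        { apply glb_ge. apply Hne. intros r2 Hr2. specialize (H2 r2 Hr2). lra. }
        lra.
      - intros t a Ht.
        assert (Hsc : forall q, (q = p \/ C q) -> q (vscal t a) = t * q a).
        { intros q [->|Cq]. apply Hp; auto. apply (HC q Cq); auto. }
        apply Rle_antisym.
        + destruct (Req_dec t 0) as [E|E].
          * subst. rewrite Rmult_0_l. eapply Rle_trans. apply (Hlow _ p); auto. rewrite (proj2 Hp) by lra. lra.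
          * assert (chain_inf p C (vscal t a) / t <= chain_inf p C a).
            { apply glb_ge. apply Hne. intros r [q [Hq ->]]. apply (Rmult_le_reg_l t). lra.
              replace (t * (chain_inf p C (vscal t a) / t)) with (chain_inf p C (vscal t a)) by (field; lra).
              rewrite <- Hsc by auto. apply Hlow; auto. }
            apply (Rmult_le_compat_l t) in H; [|lra].
            replace (t * (chain_inf p C (vscal t a) / t)) with (chain_inf p C (vscal t a)) in H by (field; lra). lra.
        + apply glb_ge. apply Hne. intros r [q [Hq ->]]. rewrite Hsc by auto. apply Rmult_le_compat_l; auto. }
    split; [|split; [|split]].
    + split; [exact Hsl|intros v; apply Hlow; auto].
    + intros v. apply Hlow; auto.
    + intros a Ca v. apply Hlow; auto.
    + intros u Hu Hua v. apply glb_ge. apply Hne. intros r [q [[->|Cq] ->]]. apply Hu. apply Hua; auto.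
  - exists s. destruct Hs as [Hs1 Hs2]. split; auto.
    apply (minimal_linear p s Hs1 Hs2).
    destruct (Hgg s (conj Hs1 Hs2)) as [_ [_ [[v Hv]|Hm]]].
    + rewrite Hgs in Hv. lra.
    + intros q' H1 H2 H3. exact (Hm q' (conj H1 H2) H3).
Qed.

Lemma Rabs_le_inv a b : Rabs a <= b -> - b <= a <= b.
Proof. intros H. pose proof (RRle_abs a). pose proof (RRle_abs (-a)). rewrite Rabs_Ropp in H1. lra. Qed.

Definition cone {X : Banach} (D : X -> Prop) (z : X) (l : R) : Prop :=
  (z = vzero /\ l = 0) \/ (l > 0 /\ D (vscal (/ l) z)).

Lemma vsub_add {X : Banach} (a b c d : X) : vsub (vadd a b) (vadd c d) = vadd (vsub a c) (vsub b d).
Proof. unfold vsub. rewrite vopp_add. apply vadd_swap. Qed.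

Lemma vsub_scal {X : Banach} t (a b : X) : vsub (vscal t a) (vscal t b) = vscal t (vsub a b).
Proof. unfold vsub. rewrite vscal_distr_v, !vopp_scal, !vscal_assoc, Rmult_comm. reflexivity. Qed.

Lemma vsub_0 {X : Banach} (a : X) : vsub a vzero = a.
Proof. unfold vsub. rewrite vopp_scal, vscal_r0. apply vadd_0. Qed.

Lemma separation {X : Banach} (D : X -> Prop) (eps : R) : eps > 0 ->
  (forall a b th, D a -> D b -> 0 <= th <= 1 -> D (vadd (vscal th a) (vscal (1 - th) b))) ->
  (forall w, D w -> eps <= vnorm w) ->
  exists phi, linf phi /\ (forall u, Rabs (phi u) <= vnorm u) /\ forall w, D w -> phi w <= - eps.
Proof.
  intros Heps Hconv HD.
  assert (cnorm : forall z l, cone D z l -> l * eps <= vnorm z).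
  { intros z l [[-> ->]|[Hl Dz]]. rewrite vnorm_0. lra.
    specialize (HD _ Dz). rewrite vnorm_scal, Rabs_right in HD by (apply Rle_ge; left; apply Rinv_0_lt_compat; lra).
    apply (Rmult_le_compat_l l) in HD; [|lra]. rewrite <- Rmult_assoc, Rinv_r in HD by lra. lra. }
  assert (cadd : forall z1 l1 z2 l2, cone D z1 l1 -> cone D z2 l2 -> cone D (vadd z1 z2) (l1 + l2)).
  { intros z1 l1 z2 l2 [[-> ->]|[H1 D1]] [[-> ->]|[H2 D2]].
    - left. rewrite vadd_0. split; auto; ring.
    - right. rewrite vadd_0l, Rplus_0_l. auto.
    - right. rewrite vadd_0, Rplus_0_r. auto.
    - right. split. lra.
      set (th := l1 / (l1 + l2)).
      assert (E : vscal (/ (l1 + l2)) (vadd z1 z2) = vadd (vscal th (vscal (/ l1) z1)) (vscal (1 - th) (vscal (/ l2) z2))).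
      { rewrite vscal_distr_v, !vscal_assoc. unfold th. f_equal; f_equal; field; lra. }
      rewrite E. apply Hconv; auto. unfold th. split.
      apply Rmult_le_pos; [lra|left; apply Rinv_0_lt_compat; lra].
      apply (Rmult_le_reg_r (l1 + l2)); [lra|]. unfold Rdiv. rewrite Rmult_assoc, Rinv_l by lra. lra. }
  assert (cscal : forall t z l, 0 <= t -> cone D z l -> cone D (vscal t z) (t * l)).
  { intros t z l Ht Hc. destruct (Req_dec t 0) as [->|Et].
    - left. rewrite vscal_0. split; auto; ring.
    - destruct Hc as [[-> ->]|[Hl Dz]].
      + left. rewrite vscal_r0. split; auto; ring.
      + right. split. nra. rewrite vscal_assoc. replace (/ (t * l) * t) with (/ l) by (field; lra). auto. }
  set (S := fun v r => exists z l, cone D z l /\ r = vnorm (vsub v z) - l * eps).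
  set (p := fun v => rglb (S v)).
  assert (Sb : forall v, exists m, forall r, S v r -> m <= r).
  { intros v. exists (- vnorm v). intros r [z [l [Hc ->]]]. pose proof (cnorm z l Hc).
    pose proof (vnorm_rev z v). rewrite vsub_norm_sym in H0. apply Rabs_le_inv in H0. lra. }
  assert (Sne : forall v, exists r, S v r).
  { intros v. exists (vnorm v). exists vzero, 0. split. left; auto. rewrite vsub_0. ring. }
  assert (Hpn : forall v, p v <= vnorm v).
  { intros v. apply glb_le. exists vzero, 0. split. left; auto. rewrite vsub_0. ring. apply Sb. }
  assert (Hsl : sublin p).
  { split.
    - intros a b.
      assert (H : forall r1 r2, S a r1 -> S b r2 -> p (vadd a b) <= r1 + r2).
      { intros r1 r2 [z1 [l1 [C1 ->]]] [z2 [l2 [C2 ->]]].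
        eapply Rle_trans. apply glb_le. exists (vadd z1 z2), (l1 + l2). split. apply cadd; auto. reflexivity. apply Sb.
        rewrite vsub_add. pose proof (vnorm_triangle (vsub a z1) (vsub b z2)). lra. }
      assert (H2 : forall r2, S b r2 -> p (vadd a b) - r2 <= p a).
      { intros r2 Hr2. apply glb_ge. apply Sne. intros r1 Hr1. specialize (H r1 r2 Hr1 Hr2). lra. }
      assert (p (vadd a b) - p a <= p b).
      { apply glb_ge. apply Sne. intros r2 Hr2. specialize (H2 r2 Hr2). lra. }
      lra.
    - intros t a Ht. destruct (Req_dec t 0) as [E|E].
      + subst. rewrite Rmult_0_l, vscal_0. apply Rle_antisym.
        * eapply Rle_trans. apply Hpn. rewrite vnorm_0. lra.
        * apply glb_ge. apply Sne. intros r [z [l [Hc ->]]]. pose proof (cnorm z l Hc).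
          unfold vsub. rewrite vadd_0l, vnorm_opp. lra.
      + assert (Htp : 0 < t) by lra. apply Rle_antisym.
        * assert (p (vscal t a) / t <= p a).
          { apply glb_ge. apply Sne. intros r [z [l [Hc ->]]]. apply (Rmult_le_reg_l t). lra.
            replace (t * (p (vscal t a) / t)) with (p (vscal t a)) by (field; lra).
            apply glb_le. 2: apply Sb. exists (vscal t z), (t * l). split. apply cscal; auto.
            rewrite vsub_scal, vnorm_scal, Rabs_right by lra. ring. }
          apply (Rmult_le_compat_l t) in H; [|lra].
          replace (t * (p (vscal t a) / t)) with (p (vscal t a)) in H by (field; lra). lra.
        * apply glb_ge. apply Sne. intros r [z [l [Hc ->]]].
          assert (Hc' : cone D (vscal (/ t) z) (/ t * l)) by (apply cscal; auto; left; apply Rinv_0_lt_compat; lra).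
          assert (E2 : vsub (vscal t a) z = vscal t (vsub a (vscal (/ t) z))).
          { rewrite <- vsub_scal, vscal_assoc, Rinv_r, vscal_1 by lra. reflexivity. }
          rewrite E2, vnorm_scal, Rabs_right by lra.
          replace (t * vnorm (vsub a (vscal (/ t) z)) - l * eps) with (t * (vnorm (vsub a (vscal (/ t) z)) - (/ t * l) * eps)) by (field; lra).
          apply Rmult_le_compat_l. lra. apply glb_le. 2: apply Sb. exists (vscal (/ t) z), (/ t * l). split; auto. }
  destruct (hb p Hsl) as [phi [Lphi Hphi]].
  exists phi. split; auto. split.
  - intros u. apply Rabs_le. split.
    + pose proof (Hphi (vopp u)). rewrite linf_opp in H by auto. pose proof (Hpn (vopp u)). rewrite vnorm_opp in H0. lra.
    + eapply Rle_trans. apply Hphi. apply Hpn.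
  - intros w Dw. eapply Rle_trans. apply Hphi. apply glb_le. 2: apply Sb.
    exists w, 1. split. right. split. lra. rewrite Rinv_1, vscal_1. auto.
    rewrite vsub_eq0, vnorm_0. ring.
Qed.

Definition ind (k : nat) : nat -> R := fun j => if Nat.eq_dec j k then 1 else 0.

Lemma ind_sum k : sum_f_R0 (ind k) k = 1.
Proof.
  destruct k. unfold ind; simpl. reflexivity.
  simpl. rewrite (sum_eq _ (fun _ => 0)). rewrite sum_cte. unfold ind.
  destruct (Nat.eq_dec (S k) (S k)); [|lia]. ring.
  intros i Hi. unfold ind. destruct (Nat.eq_dec i (S k)); [lia|auto].
Qed.

Lemma ind_vsum {X : Banach} (u : nat -> X) k : vsum (fun j => vscal (ind k j) (u j)) k = u k.
Proof.
  destruct k. unfold ind; simpl. apply vscal_1.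
  simpl. rewrite (vsum_ext _ (fun _ => vzero)). rewrite vsum_zero, vadd_0l. unfold ind.
  destruct (Nat.eq_dec (S k) (S k)); [|lia]. apply vscal_1.
  intros i Hi. unfold ind. destruct (Nat.eq_dec i (S k)); [lia|]. apply vscal_0.
Qed.

Lemma ind_prob k : fin_prob (ind k) k.
Proof.
  split; [|split]. intros n; unfold ind; destruct (Nat.eq_dec n k); lra.
  intros n Hn; unfold ind; destruct (Nat.eq_dec n k); [lia|auto].
  apply ind_sum.
Qed.

Lemma mix_vec {X : Banach} th (s1 s2 y : X) :
  vadd (vscal th (vsub s1 y)) (vscal (1 - th) (vsub s2 y)) = vsub (vadd (vscal th s1) (vscal (1 - th) s2)) y.
Proof.
  rewrite <- !vsub_scal, <- vsub_add, vscal_add_l. replace (th + (1 - th)) with 1 by ring. rewrite vscal_1. reflexivity.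
Qed.

Lemma mazur {X : Banach} (u : nat -> X) (y : X) : weak_cv u y ->
  forall m eps, eps > 0 -> exists L lam, fin_prob lam L /\ (forall k, (k < m)%nat -> lam k = 0) /\
    vnorm (vsub (vsum (fun k => vscal (lam k) (u k)) L) y) < eps.
Proof.
  intros Hw m eps Heps. apply NNPP. intros NH.
  set (D := fun w => exists L lam, fin_prob lam L /\ (forall k, (k < m)%nat -> lam k = 0) /\
              w = vsub (vsum (fun k => vscal (lam k) (u k)) L) y).
  assert (HD : forall w, D w -> eps <= vnorm w).
  { intros w [L [lam [H1 [H2 ->]]]]. apply Rnot_lt_le. intros H. apply NH. exists L, lam. auto. }
  assert (Hconv : forall a b th, D a -> D b -> 0 <= th <= 1 -> D (vadd (vscal th a) (vscal (1 - th) b))).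
  { intros a b th [L1 [l1 [[P1 [Q1 S1]] [Z1 ->]]]] [L2 [l2 [[P2 [Q2 S2]] [Z2 ->]]]] Hth.
    set (L := max L1 L2). set (lam := fun k => th * l1 k + (1 - th) * l2 k).
    exists L, lam. split; [|split].
    - split; [|split].
      + intros n. unfold lam. pose proof (P1 n); pose proof (P2 n). nra.
      + intros n Hn. unfold lam. rewrite Q1, Q2 by lia. ring.
      + unfold lam. rewrite plus_sum, <- !sum_scal_l.
        rewrite (sum_tail l1 L1 L), (sum_tail l2 L2 L) by (auto; lia). rewrite S1, S2. ring.
    - intros k Hk. unfold lam. rewrite Z1, Z2 by auto. ring.
    - rewrite mix_vec. f_equal.
      assert (T1 : vsum (fun k => vscal (l1 k) (u k)) L = vsum (fun k => vscal (l1 k) (u k)) L1).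
      { apply vsum_tail. intros n Hn. rewrite Q1 by lia. apply vscal_0. lia. }
      assert (T2 : vsum (fun k => vscal (l2 k) (u k)) L = vsum (fun k => vscal (l2 k) (u k)) L2).
      { apply vsum_tail. intros n Hn. rewrite Q2 by lia. apply vscal_0. lia. }
      rewrite <- T1, <- T2.
      rewrite !vsum_scal, <- vsum_add. apply vsum_ext. intros n _. unfold lam.
      rewrite !vscal_assoc, vscal_add_l. reflexivity. }
  destruct (separation D eps Heps Hconv HD) as [phi [Lphi [Bphi Sphi]]].
  assert (Hb : bounded_linear phi).
  { split; [apply Lphi|split; [apply Lphi|]]. exists 1. intros a. rewrite Rmult_1_l. auto. }
  destruct (Hw phi Hb eps Heps) as [N0 HN0].
  specialize (HN0 (max N0 m) ltac:(lia)). unfold R_dist in HN0.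
  assert (Dk : D (vsub (u (max N0 m)) y)).
  { exists (max N0 m), (ind (max N0 m)). split. apply ind_prob. split.
    intros k Hk. unfold ind. destruct (Nat.eq_dec k (max N0 m)); [lia|auto].
    rewrite ind_vsum. reflexivity. }
  specialize (Sphi _ Dk). rewrite linf_sub in Sphi by auto.
  apply Rabs_def2 in HN0. lra.
Qed.

Fixpoint nsum (N : nat -> nat) (L : nat) : nat :=
  match L with O => N O | S L' => (nsum N L' + N (S L'))%nat end.

Lemma nsum_ge N L k : (k <= L)%nat -> (N k <= nsum N L)%nat.
Proof. induction L; intros H; simpl. replace k with O by lia. lia.
  destruct (Nat.eq_dec k (S L)). subst; lia. specialize (IHL ltac:(lia)). lia. Qed.

Lemma vsum_sub {X : Banach} (a b : nat -> X) N : vsub (vsum a N) (vsum b N) = vsum (fun n => vsub (a n) (b n)) N.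
Proof.
  unfold vsub. rewrite vopp_scal, vsum_scal, <- vsum_add. apply vsum_ext. intros. rewrite vopp_scal. reflexivity.
Qed.

Lemma vscal_sub_l {X : Banach} r s (a : X) : vsub (vscal r a) (vscal s a) = vscal (r - s) a.
Proof. unfold vsub. rewrite vopp_scal, vscal_assoc, vscal_add_l. f_equal. ring. Qed.

Lemma compose_real (c : nat -> nat -> R) (N : nat -> nat) (lam : nat -> R) L (a : nat -> R) :
  (forall k, fin_prob (c k) (N k)) ->
  sum_f_R0 (fun n => sum_f_R0 (fun k => lam k * c k n) L * a n) (nsum N L) =
  sum_f_R0 (fun k => lam k * sum_f_R0 (fun n => c k n * a n) (N k)) L.
Proof.
  intros hc.
  rewrite (sum_eq _ (fun n => sum_f_R0 (fun k => lam k * c k n * a n) L)).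
  2: { intros i _. rewrite Rmult_comm, sum_scal_l. apply sum_eq. intros; ring. }
  rewrite sum_exchange. apply sum_eq. intros k Hk.
  rewrite sum_scal_l. rewrite (sum_tail _ (N k) (nsum N L)).
  apply sum_eq. intros; ring.
  intros n Hn. destruct (hc k) as [_ [Z _]]. rewrite Z by lia. ring. apply nsum_ge; auto.
Qed.

Lemma compose_vec {X : Banach} (c : nat -> nat -> R) (N : nat -> nat) (lam : nat -> R) L (x : nat -> X) :
  (forall k, fin_prob (c k) (N k)) ->
  vsum (fun n => vscal (sum_f_R0 (fun k => lam k * c k n) L) (x n)) (nsum N L) =
  vsum (fun k => vscal (lam k) (vsum (fun n => vscal (c k n) (x n)) (N k))) L.
Proof.
  intros hc.
  rewrite (vsum_ext _ (fun n => vsum (fun k => vscal (lam k * c k n) (x n)) L)).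
  2: { intros i _. rewrite vsum_const. reflexivity. }
  rewrite vsum_exchange. apply vsum_ext. intros k Hk.
  rewrite vsum_scal. rewrite (vsum_tail _ (N k) (nsum N L)).
  apply vsum_ext. intros; rewrite vscal_assoc; reflexivity.
  intros n Hn. destruct (hc k) as [_ [Z _]]. rewrite Z by lia. rewrite Rmult_0_r. apply vscal_0. apply nsum_ge; auto.
Qed.

Lemma build {X : Banach} (x : nat -> X) (f : nat -> X -> R) (y : X) (c : nat -> nat -> R) (N : nat -> nat)
  (hc : forall k, fin_prob (c k) (N k))
  (hi : weak_cv (fun k => vsum (fun n => vscal (c k n) (x n)) (N k)) y)
  (hii : Un_cv (fun k => sum_f_R0 (fun n => c k n * f n y) (N k)) 1) :
  forall eps, eps > 0 -> exists d M, fin_prob d M /\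
    vnorm (vsub (vsum (fun n => vscal (d n) (x n)) M) y) < eps /\
    sum_f_R0 (fun n => d n * f n y) M >= 1 - eps.
Proof.
  intros eps Heps. destruct (hii eps Heps) as [m Hm].
  destruct (mazur _ y hi m eps Heps) as [L [lam [[P0 [P1 P2]] [Z Hn]]]].
  exists (fun n => sum_f_R0 (fun k => lam k * c k n) L), (nsum N L). split; [|split].
  - split; [|split].
    + intros n. apply sum_nonneg. intros k _. destruct (hc k) as [C0 _]. apply Rmult_le_pos; auto.
    + intros n Hn2. rewrite (sum_eq _ (fun _ => 0)). rewrite sum_cte. ring.
      intros k Hk. destruct (hc k) as [_ [C1 _]]. rewrite C1. ring. pose proof (nsum_ge N L k Hk). lia.
    + pose proof (compose_real c N lam L (fun _ => 1) hc) as H. cbv beta in H.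
      assert (E1 : sum_f_R0 (fun n => sum_f_R0 (fun k => lam k * c k n) L) (nsum N L) =
                   sum_f_R0 (fun n => sum_f_R0 (fun k => lam k * c k n) L * 1) (nsum N L)) by (apply sum_eq; intros; ring).
      rewrite E1, H. transitivity (sum_f_R0 lam L); [|exact P2]. apply sum_eq.
      intros k Hk. destruct (hc k) as [_ [_ C2]].
      assert (E2 : sum_f_R0 (fun n => c k n * 1) (N k) = sum_f_R0 (c k) (N k)) by (apply sum_eq; intros; ring).
      rewrite E2, C2. ring.
  - rewrite compose_vec by auto. auto.
  - cbv beta.
    rewrite compose_real by auto.
    apply Rle_ge, Rle_trans with (sum_f_R0 (fun k => lam k * (1 - eps)) L).
    + rewrite <- scal_sum, P2. lra.
    + apply sum_Rle. intros k Hk. destruct (Nat.lt_ge_cases k m) as [h|h].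
      * rewrite Z by auto. lra.
      * specialize (Hm k ltac:(lia)). unfold R_dist in Hm. apply Rabs_def2 in Hm.
        apply Rmult_le_compat_l; auto. lra.
Qed.

Lemma sot_bound {X : Banach} (x : nat -> X) (f : nat -> X -> R) (y v : X) (g : X -> R) d M :
  (forall n, vnorm (x n) = 1) -> fin_prob d M ->
  vnorm (vsub (conv_op d M x f v) (rank_one g y v)) <=
  sum_f_R0 (fun n => d n * Rabs (f n v - g v)) M + Rabs (g v) * vnorm (vsub (vsum (fun n => vscal (d n) (x n)) M) y).
Proof.
  intros hx [D0 _].
  set (B := vscal (g v) (vsum (fun n => vscal (d n) (x n)) M)).
  eapply Rle_trans. apply (vnorm_sub_tri _ B). apply Rplus_le_compat.
  - unfold B. rewrite conv_eval, vsum_scal, vsum_sub. eapply Rle_trans. apply vsum_norm.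
    apply sum_Rle. intros n _. rewrite vscal_assoc, vscal_sub_l, vnorm_scal, hx, Rmult_1_r.
    right. replace (d n * f n v - g v * d n) with (d n * (f n v - g v)) by ring. rewrite Rabs_mult, Rabs_right by (apply Rle_ge; auto). ring.
  - unfold B, rank_one. rewrite vsub_scal, vnorm_scal. lra.
Qed.

Lemma sot_part {X : Banach} (x : nat -> X) (f : nat -> X -> R) (y : X) (g : X -> R) (d : nat -> nat -> R) (M : nat -> nat)
  (hx : forall n, vnorm (x n) = 1)
  (hy : vnorm y = 1) (Lg : linf g) (Hg : forall u, Rabs (g u) <= vnorm u) (hgy : g y = 1)
  (Lf : forall n, linf (f n)) (Hf : forall n u, Rabs (f n u) <= vnorm u)
  (hsmooth : gateaux_smooth y)
  (hd : forall l, fin_prob (d l) (M l))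
  (h1 : forall l, vnorm (vsub (vsum (fun n => vscal (d l n) (x n)) (M l)) y) < / (INR l + 1))
  (h2 : forall l, sum_f_R0 (fun n => d l n * f n y) (M l) >= 1 - / (INR l + 1)) :
  sot_cv (fun l => conv_op (d l) (M l) x f) (rank_one g y).
Proof.
  intros v eps Heps.
  destruct (key_bound y v g f hsmooth hy Lg Hg hgy Lf Hf (eps/2) ltac:(lra)) as [K [HK HKb]].
  set (Q := K + Rabs (g v) + 1).
  assert (HQ : 0 < Q) by (unfold Q; pose proof (Rabs_pos (g v)); lra).
  destruct (INR_unbounded (2 * Q / eps)) as [l0 Hl0].
  exists l0. intros l Hl. unfold R_dist. rewrite Rminus_0_r, Rabs_right by (apply Rle_ge, vnorm_nonneg).
  assert (He : Q * / (INR l + 1) < eps / 2).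
  { pose proof (le_INR _ _ Hl). pose proof (pos_INR l0).
    assert (2 * Q / eps < INR l + 1) by lra.
    apply (Rmult_lt_compat_r (eps / 2)) in H1; [|lra].
    replace (2 * Q / eps * (eps / 2)) with Q in H1 by (field; lra).
    apply (Rmult_lt_reg_r (INR l + 1)). lra. rewrite Rmult_assoc, Rinv_l by lra.
    lra. }
  assert (Hepos : 0 < / (INR l + 1)) by (apply Rinv_0_lt_compat; pose proof (pos_INR l); lra).
  eapply Rle_lt_trans. apply sot_bound; auto.
  pose proof (conv_err y v g f (eps/2) K (d l) (M l) HKb (hd l)).
  specialize (h1 l). specialize (h2 l).
  assert (K * (1 - sum_f_R0 (fun n => d l n * f n y) (M l)) <= K * / (INR l + 1)) by (apply Rmult_le_compat_l; lra).
  assert (Rabs (g v) * vnorm (vsub (vsum (fun n => vscal (d l n) (x n)) (M l)) y) <= Rabs (g v) * / (INR l + 1))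
    by (apply Rmult_le_compat_l; [apply Rabs_pos|lra]).
  assert (K * / (INR l + 1) + Rabs (g v) * / (INR l + 1) <= Q * / (INR l + 1)) by (unfold Q; nra).
  lra.
Qed.

Lemma vsub_eq0_inv {X : Banach} (a b : X) : vsub a b = vzero -> a = b.
Proof.
  unfold vsub. intros H. assert (vadd (vadd a (vopp b)) b = vadd vzero b) by now rewrite H.
  rewrite <- vadd_assoc, (vadd_comm (vopp b)), vadd_opp, vadd_0, vadd_0l in H0. auto.
Qed.

Lemma flinn_part {X : Banach} (x : nat -> X) (f : nat -> X -> R) (y : X) (g : X -> R) (d : nat -> nat -> R) (M : nat -> nat)
  (hx : forall n, vnorm (x n) = 1) (hy : vnorm y = 1) (Bg : bounded_linear g) (hgy : g y = 1)
  (Lf : forall n, linf (f n)) (hfx : forall n, f n (x n) = 1)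
  (hd : forall l, fin_prob (d l) (M l))
  (hs : sot_cv (fun l => conv_op (d l) (M l) x f) (rank_one g y)) :
  (forall n, flinn_pair (x n) (f n)) -> flinn_pair y g.
Proof.
  intros Hfl. pose proof (linf_of_bl g Bg) as Lg.
  split; [exact hy|split; [exact Bg|]]. split.
  - intros t [v [Hv ->]].
    assert (Hl : forall l, vnorm (vsub v (conv_op (d l) (M l) x f v)) <= 1).
    { intros l. destruct (hd l) as [D0 [_ D2]].
      assert (E : vsub v (conv_op (d l) (M l) x f v) =
                  vsum (fun n => vscal (d l n) (vsub v (rank_one (f n) (x n) v))) (M l)).
      { unfold conv_op. rewrite <- (vscal_1 v) at 1. rewrite <- D2, <- vsum_const, vsum_sub.
        apply vsum_ext. intros. rewrite <- vsub_scal. reflexivity. }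
      rewrite E. eapply Rle_trans. apply vsum_norm. rewrite <- D2. apply sum_Rle. intros n _.
      rewrite vnorm_scal, Rabs_right by (apply Rle_ge; auto).
      rewrite <- (Rmult_1_r (d l n)) at 2. apply Rmult_le_compat_l; auto.
      destruct (Hfl n) as [_ [_ [Hub _]]]. apply Hub. exists v. split; auto. }
    apply Rnot_lt_le. intros Hlt.
    set (eta := vnorm (vsub v (rank_one g y v)) - 1).
    destruct (hs v eta ltac:(unfold eta; lra)) as [N0 HN0]. specialize (HN0 N0 (le_n _)).
    unfold R_dist in HN0. rewrite Rminus_0_r, Rabs_right in HN0 by (apply Rle_ge, vnorm_nonneg).
    pose proof (vnorm_sub_tri v (conv_op (d N0) (M N0) x f v) (rank_one g y v)).
    specialize (Hl N0). unfold eta in HN0. lra.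
  - intros b Hb.
    assert (Hex : exists v, vsub v (rank_one g y v) <> vzero).
    { apply NNPP. intros H.
      assert (Hall : forall v, v = vscal (g v) y).
      { intros v. apply vsub_eq0_inv. apply NNPP. intros H2. apply H. exists v. auto. }
      destruct (Hfl 0%nat) as [_ [_ [Hub Hlub]]].
      assert (Z : forall v, vsub v (rank_one (f 0%nat) (x 0%nat) v) = vzero).
      { intros v. unfold rank_one.
        assert (E1 : f 0%nat v = g v * f 0%nat y) by (rewrite (Hall v) at 1; apply (proj2 (Lf 0%nat))).
        assert (E3 : g (x 0%nat) * f 0%nat y = 1).
        { rewrite <- (hfx 0%nat). rewrite (Hall (x 0%nat)) at 2. rewrite (proj2 (Lf 0%nat)). reflexivity. }
        rewrite E1. rewrite (Hall (x 0%nat)) at 1. rewrite vscal_assoc.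
        replace (g v * f 0%nat y * g (x 0%nat)) with (g v) by (rewrite Rmult_assoc, (Rmult_comm (f 0%nat y)), E3; ring).
        rewrite (Hall v) at 1. apply vsub_eq0. }
      assert (1 <= 0).
      { apply Hlub. intros t [v [_ ->]]. rewrite Z, vnorm_0. lra. }
      lra. }
    destruct Hex as [v Hv].
    set (w := vsub v (rank_one g y v)).
    assert (Hgw : g w = 0). { unfold w, rank_one. rewrite linf_sub, (proj2 Lg), hgy by auto. ring. }
    assert (Hw : vnorm w <> 0). { intros E. apply vnorm_eq0 in E. auto. }
    pose proof (vnorm_nonneg w).
    set (u := vscal (/ vnorm w) w).
    assert (Hu : vnorm u = 1).
    { unfold u. rewrite vnorm_scal, Rabs_right. field; auto. apply Rle_ge; left; apply Rinv_0_lt_compat; lra. }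
    apply Hb. exists u. split. lra.
    unfold rank_one. replace (g u) with 0. rewrite vscal_0. unfold vsub. rewrite vopp_scal, vscal_r0, vadd_0. auto.
    unfold u. rewrite (proj2 Lg), Hgw. ring.
Qed.

Theorem lemma2p3 (X : Banach) (x : nat -> X) (f : nat -> X -> R)
  (y : X) (g : X -> R) (c : nat -> nat -> R) (N : nat -> nat)
  (hx : forall n, in_sphere (x n)) (hf : forall n, in_dual_sphere (f n))
  (hfx : forall n, f n (x n) = 1)
  (hy : in_sphere y) (hg : in_dual_sphere g) (hgy : g y = 1)
  (hsmooth : gateaux_smooth y)
  (hc : forall k, fin_prob (c k) (N k))
  (hi : weak_cv (fun k => vsum (fun n => vscal (c k n) (x n)) (N k)) y)
  (hii : Un_cv (fun k => sum_f_R0 (fun n => c k n * f n y) (N k)) 1) :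
  wot_cv (fun k => conv_op (c k) (N k) x f) (rank_one g y) /\
  (exists (d : nat -> nat -> R) (M : nat -> nat),
     (forall l, fin_prob (d l) (M l)) /\
     sot_cv (fun l => conv_op (d l) (M l) x f) (rank_one g y)) /\
  ((forall n, flinn_pair (x n) (f n)) -> flinn_pair y g).
Proof.
  destruct hg as [Bg Ng].
  assert (Lg : linf g) by (apply linf_of_bl; auto).
  assert (Hg : forall u, Rabs (g u) <= vnorm u) by (apply dual_bound; auto).
  assert (Lf : forall n, linf (f n)) by (intros n; apply linf_of_bl, (hf n)).
  assert (Hf : forall n u, Rabs (f n u) <= vnorm u) by (intros n; apply dual_bound; apply (hf n)).
  assert (Hexd : forall l : nat, exists dM : (nat -> R) * nat, fin_prob (fst dM) (snd dM) /\
     vnorm (vsub (vsum (fun n => vscal (fst dM n) (x n)) (snd dM)) y) < / (INR l + 1) /\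
     sum_f_R0 (fun n => fst dM n * f n y) (snd dM) >= 1 - / (INR l + 1)).
  { intros l. destruct (build x f y c N hc hi hii (/ (INR l + 1))) as [d [M H]].
    apply Rinv_0_lt_compat; pose proof (pos_INR l); lra. exists (d, M). exact H. }
  destruct (choice _ Hexd) as [F HF].
  set (d := fun l => fst (F l)). set (M := fun l => snd (F l)).
  assert (Hsot : sot_cv (fun l => conv_op (d l) (M l) x f) (rank_one g y)).
  { apply sot_part; auto; intros l; apply (HF l). }
  split; [|split].
  - apply wot_part; auto.
  - exists d, M. split; auto. intros l; apply (HF l).
  - apply (flinn_part x f y g d M); auto. intros l; apply (HF l).
Qed.
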